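(* Let $n>2k-t$, $q\geq 3$ and $k>2t+2$. Then \[\theta_{k+1}-\theta_{k-t}+\left[{n-t\atop k-t}\right]_q-q^{(k-t+1)(k-t)}\left[{n-k-1\atop k-t}\right]_q>\left[{n-t-2\atop k-t-2}\right]_q\left(1+\theta_{t+2}q^{k-t-1}\frac{q^{n-k}-1}{q^{k-t-1}-1}\right),\] i.e. the set of all $k$-spaces of $\mathrm{PG}(n,q)$ in $\langle\pi,\delta\rangle$ together with all $k$-spaces through $\delta$ meeting $\langle\pi,\delta\rangle$ in at least a $(t+1)$-space (for a $t$-space $\delta$ and $k$-space $\pi$ with $\dim(\pi\cap\delta)=t-1$) is larger than the set of all $k$-spaces meeting a fixed $(t+2)$-space in at least a $(t+1)$-space.
   Context: $\left[{n\atop k}\right]_q=\frac{(q^n-1)\cdots(q^{n-k+1}-1)}{(q^k-1)\cdots(q-1)}$ for $k>0$, $=1$ for $k=0$; $\theta_m=\frac{q^{m+1}-1}{q-1}$; $q$ is a prime power; dimensions are projective. *)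

(* Defs.v *)
From mathcomp Require Import all_boot all_order all_algebra.
Set Implicit Arguments. Unset Strict Implicit. Unset Printing Implicit Defensive.
Import Order.TTheory GRing.Theory Num.Theory.
Local Open Scope ring_scope.

Definition gauss (q n k : nat) : rat :=
  \prod_(i < k) (((q%:R : rat) ^+ (n - i)%N - 1) / ((q%:R : rat) ^+ i.+1 - 1)).

Definition theta (q m : nat) : rat :=
  ((q%:R : rat) ^+ m.+1 - 1) / ((q%:R : rat) - 1).

Definition prime_power (q : nat) : Prop := exists p e : nat, prime p /\ (0 < e)%N /\ q = (p ^ e)%N.

(* Main.v *)
Require Import Defs.
From mathcomp Require Import all_boot all_order all_algebra.
From mathcomp Require Import ring lra zify.
Import Order.TTheory GRing.Theory Num.Theory.
Local Open Scope ring_scope.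

Lemma pow_ge (y : rat) a : 3 <= y -> (0 < a)%N -> y <= y ^+ a.
Proof.
move=> hy ha. have h1 : 1 < y by lra.
by rewrite -{1}(expr1 y) (ler_eXn2l h1).
Qed.

Lemma pow_le (y : rat) a b : 3 <= y -> (a <= b)%N -> y ^+ a <= y ^+ b.
Proof. move=> hy hab. have h1 : 1 < y by lra. by rewrite (ler_eXn2l h1). Qed.

Lemma num_shift (y : rat) N j :
  (\prod_(i < j) (y ^+ (N.+1 - i) - 1)) * (y ^+ (N.+1 - j) - 1)
  = (y ^+ N.+1 - 1) * \prod_(i < j) (y ^+ (N - i) - 1).
Proof.
elim: j => [|j IH]; first by rewrite !big_ord0 subn0 mulr1 mul1r.
by rewrite !big_ord_recr /= subSS IH mulrA.
Qed.

Lemma gauss_split q N j : gauss q N j =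
  (\prod_(i < j) ((q%:R : rat) ^+ (N - i) - 1)) / \prod_(i < j) ((q%:R : rat) ^+ i.+1 - 1).
Proof. by rewrite /gauss prodf_div. Qed.

Lemma gauss_shift2 q N j :
  gauss q N.+2 j * (((q%:R : rat) ^+ (N.+2 - j) - 1) * ((q%:R : rat) ^+ (N.+1 - j) - 1))
  = gauss q N j * (((q%:R : rat) ^+ N.+2 - 1) * ((q%:R : rat) ^+ N.+1 - 1)).
Proof.
rewrite !gauss_split mulrAC [RHS]mulrAC; congr (_ / _).
by rewrite mulrA num_shift -mulrA num_shift; ring.
Qed.

Lemma gauss_recr q N j : gauss q N j.+1 =
  gauss q N j * (((q%:R : rat) ^+ (N - j) - 1) / ((q%:R : rat) ^+ j.+1 - 1)).
Proof. by rewrite /gauss big_ord_recr. Qed.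

Lemma gauss_gt0 q N j : (3 <= q)%N -> (j <= N)%N -> 0 < gauss q N j.
Proof.
move=> hq hj. have hy : 3 <= (q%:R : rat) by rewrite (ler_nat _ 3 q).
rewrite /gauss; apply: prodr_gt0 => i _.
apply: divr_gt0; rewrite subr_gt0.
  have := pow_ge _ (N - i) hy; have : (0 < N - i)%N by have := ltn_ord i; lia.
  move=> h1 h2; have := h2 h1; lra.
have := pow_ge _ i.+1 hy (ltn0Sn _); lra.
Qed.
Lemma lemM (a b c d : rat) : 0 <= a -> 0 <= b -> a <= c -> b <= d -> a * b <= c * d.
Proof. by move=> *; apply: ler_pM. Qed.

Lemma pcL (y E R : rat) : 0 <= E -> 0 <= R -> 3 <= y -> 243 <= y * E * R -> 81 <= E * R -> 27 <= y*y*R ->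
  192 * (y*y*y*E*E*R*R*R) <= 162 * ((y*E*R - 1)*(E*R - 1)*(y*y*R - 1)*(y-1)).
Proof.
move=> hE0 hR0 hy hyER hER hyyR.
have h1 : (8*(y*E*R))*(8*(E*R)) <= (9*(y*E*R-1))*(9*(E*R-1)) by apply: lemM; lra.
have h3 : (y*y*R)*y <= 2*((y*y*R-1)*(y-1)).
  have h := lemM 25 1 (y*y*R-2) (y-2).
  have e1 : 2*((y*y*R-1)*(y-1)) - (y*y*R)*y = (y*y*R-2)*(y-2) - 2 by ring.
  have : 25 * 1 <= (y*y*R-2)*(y-2) by apply: h; lra.
  lra.
have h4 := lemM ((8*(y*E*R))*(8*(E*R))) ((y*y*R)*y) ((9*(y*E*R-1))*(9*(E*R-1))) (2*((y*y*R-1)*(y-1))).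
have e2 : (8*(y*E*R))*(8*(E*R))*((y*y*R)*y) = 64 * (y * (y*y*y*E*E*R*R*R)) by ring.
have e3 : (9*(y*E*R-1))*(9*(E*R-1))*(2*((y*y*R-1)*(y-1))) =
          162 * ((y*E*R - 1)*(E*R - 1)*(y*y*R - 1)*(y-1)) by ring.
have hM : 0 <= y*y*y*E*E*R*R*R by repeat apply: mulr_ge0; lra.
have h5 : 3 * (y*y*y*E*E*R*R*R) <= y * (y*y*y*E*E*R*R*R) by apply: ler_wpM2r => //; lra.
have : 0 <= (8*(y*E*R))*(8*(E*R)) by apply: mulr_ge0; lra.
have : 0 <= (y*y*R)*y by apply: mulr_ge0; lra.
move=> p1 p2; have := h4 p2 p1 h1 h3.
rewrite e2 e3. lra.
Qed.

Lemma pcB (y E R T : rat) : 3 <= y -> 3 <= R -> y <= E -> 27 <= E -> 27 <= T ->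
  9 * ((y-1)*(R-1) + (T-1)*R*(E-1)) <= 10 * (T*R*E).
Proof.
move=> hy hR hyE hE hT.
have h1 : (y-1)*(R-1) <= y * R.
  have -> : (y-1)*(R-1) = y*R - y - R + 1 by ring. lra.
have h2 : (T-1)*R*(E-1) <= T*R*E.
  have h : 0 <= T*R + R*E - R.
    have : 0 <= T*R by apply: mulr_ge0; lra.
    have : 0 <= R*(E-1) by apply: mulr_ge0; lra.
    have -> : T*R + R*E - R = T*R + R*(E-1) by ring.
    lra.
  have -> : (T-1)*R*(E-1) = T*R*E - (T*R + R*E - R) by ring.
  lra.
have h3 : 9 * (y*R) <= T*R*E.
  have h : 9 * y <= T * E by have := lemM 9 y T E; lra.
  have -> : T*R*E = (T*E)*R by ring.
  have -> : 9 * (y*R) = (9*y)*R by ring.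
  apply: ler_pM; lra.
lra.
Qed.

Lemma pcR (y E R T : rat) : 3 <= y -> 3 <= R -> y <= E -> 27 <= E -> 27 <= T -> T <= y*R ->
  9 * ((y*E-1)*(y*R-1)*((y-1)*(R-1) + (T-1)*R*(E-1))) <= 10 * (y*y*y*E*E*R*R*R).
Proof.
move=> hy hR hyE hE hT hTR.
have hyR : 9 <= y * R by have := lemM 3 3 y R; lra.
have hyE' : 81 <= y * E by have := lemM 3 27 y E; lra.
have h1 : (y*E-1)*(y*R-1) <= (y*E)*(y*R) by apply: lemM; lra.
have hb : 0 <= 9 * ((y-1)*(R-1) + (T-1)*R*(E-1)).
  have : 0 <= (y-1)*(R-1) by apply: mulr_ge0; lra.
  have : 0 <= (T-1)*R*(E-1) by apply: mulr_ge0; [apply: mulr_ge0|]; lra.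
  lra.
have h2 := lemM ((y*E-1)*(y*R-1)) (9 * ((y-1)*(R-1) + (T-1)*R*(E-1))) ((y*E)*(y*R)) (10 * (T*R*E)).
have : 0 <= (y*E-1)*(y*R-1) by apply: mulr_ge0; lra.
move=> p; have {h2} h2 := h2 p hb h1 (pcB _ _ _ _ hy hR hyE hE hT).
have e1 : 9 * ((y*E-1)*(y*R-1)*((y-1)*(R-1) + (T-1)*R*(E-1))) =
   (y*E-1)*(y*R-1) * (9 * ((y-1)*(R-1) + (T-1)*R*(E-1))) by ring.
have e2 : (y*E)*(y*R)*(10 * (T*R*E)) = (10*(y*y*E*E*R*R)) * T by ring.
have e3 : 10 * (y*y*y*E*E*R*R*R) = (10*(y*y*E*E*R*R)) * (y*R) by ring.
have hP : 0 <= 10*(y*y*E*E*R*R) by apply: mulr_ge0; [lra|]; repeat apply: mulr_ge0; lra.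
have h3 : (10*(y*y*E*E*R*R)) * T <= (10*(y*y*E*E*R*R)) * (y*R) by apply: ler_wpM2l.
rewrite e1 e3; rewrite e2 in h2; lra.
Qed.

Lemma finC (Lp Rp M : rat) : 0 < M -> 192 * M <= 162 * Lp -> 9 * Rp <= 10 * M -> 0 < Lp - Rp.
Proof. move=> hM hL hR. lra. Qed.

Lemma polyC (y E R T : rat) : 3 <= y -> 3 <= R -> y*y*R <= E -> 27 <= T -> T <= y*R ->
 0 < (y*E*R - 1)*(E*R - 1)*(y*y*R - 1)*(y-1)
     - (y*E-1)*(y*R-1)*((y-1)*(R-1) + (T-1)*R*(E-1)).
Proof.
move=> hy hR hE hT hTR.
have hyy : 9 <= y * y by have := lemM 3 3 y y; lra.
have hyyR : 27 <= y * y * R by have := lemM 9 3 (y*y) R; lra.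
have hE1 : 27 <= E by lra.
have hER : 81 <= E * R by have := lemM 27 3 E R; lra.
have hyE : 81 <= y * E by have := lemM 3 27 y E; lra.
have hyER : 243 <= y * E * R by have := lemM 81 3 (y*E) R; lra.
have hyE2 : y <= E.
  have := lemM 1 y (y*R) y; have -> : y*R*y = y*y*R by ring. lra.
have hM : 0 < y*y*y*E*E*R*R*R by repeat apply: mulr_gt0; lra.
have hE0 : 0 <= E by lra.
have hR0 : 0 <= R by lra.
have hL := pcL _ _ _ hE0 hR0 hy hyER hER hyyR.
have hRR := pcR _ _ _ _ hy hR hyE2 hE1 hT hTR.
have := finC _ _ _ hM hL hRR.
exact.
Qed.

Lemma stepC (y E R T : rat) : 3 <= y -> 3 <= R -> y*y*R <= E -> 27 <= T -> T <= y*R ->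
  1 + (T-1)/(y-1) * R * ((E-1)/(R-1)) <
  (y*E*R-1)*(E*R-1)/((y*E-1)*(R-1)) * ((y*y*R-1)/(y*R-1)).
Proof.
move=> hy hR hE hT hTR.
have hP := polyC _ _ _ _ hy hR hE hT hTR.
have hyR : 9 <= y * R by have := lemM 3 3 y R; lra.
have hE1 : 27 <= E by have := lemM 9 3 (y*y) R; have := lemM 3 3 y y; lra.
have hyE : 81 <= y * E by have := lemM 3 27 y E; lra.
have n1 : y*E - 1 != 0 by apply/eqP; lra.
have n2 : R - 1 != 0 by apply/eqP; lra.
have n3 : y*R - 1 != 0 by apply/eqP; lra.
have n4 : y - 1 != 0 by apply/eqP; lra.
rewrite -subr_gt0.
have -> : (y*E*R-1)*(E*R-1)/((y*E-1)*(R-1)) * ((y*y*R-1)/(y*R-1)) -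
   (1 + (T-1)/(y-1) * R * ((E-1)/(R-1))) =
   ((y*E*R - 1)*(E*R - 1)*(y*y*R - 1)*(y-1)
     - (y*E-1)*(y*R-1)*((y-1)*(R-1) + (T-1)*R*(E-1))) / ((y*E-1)*(R-1)*(y*R-1)*(y-1)).
  by field; rewrite ?n1 ?n2 ?n3 ?n4.
apply: divr_gt0 => //.
repeat apply: mulr_gt0; lra.
Qed.

Lemma ptw q e j i : (3 <= q)%N -> (j.+3 <= e)%N -> (i <= j.+1)%N ->
  0 <= (q%:R : rat) ^+ j.+3 * (((q%:R : rat) ^+ (e - 1 - i) - 1) / ((q%:R : rat) ^+ i.+1 - 1)) /\
  (q%:R : rat) ^+ j.+3 * (((q%:R : rat) ^+ (e - 1 - i) - 1) / ((q%:R : rat) ^+ i.+1 - 1))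
   + ((q%:R : rat) ^+ j.+3 - 1) / ((q%:R : rat) ^+ i.+1 - 1)
  = ((q%:R : rat) ^+ ((e + j).+2 - i) - 1) / ((q%:R : rat) ^+ i.+1 - 1).
Proof.
move=> hq he hi.
have hy : 3 <= (q%:R : rat) by rewrite (ler_nat _ 3 q).
set y := (q%:R : rat).
have hd : 3 <= y ^+ i.+1 by have := pow_ge _ i.+1 hy (ltn0Sn _); lra.
have h1 : 1 <= y ^+ (e - 1 - i) by apply: exprn_ege1; lra.
have h0 : 0 <= y ^+ j.+3 by apply: exprn_ge0; lra.
split.
  apply: mulr_ge0 => //; apply: divr_ge0; lra.
have ex : y ^+ ((e + j).+2 - i) = y ^+ j.+3 * y ^+ (e - 1 - i).
  by rewrite -exprD; congr (_ ^+ _); lia.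
rewrite ex.
have nd : y ^+ i.+1 - 1 != 0 by apply/eqP; lra.
by field.
Qed.

Lemma stepA q e j : (3 <= q)%N -> (j.+3 <= e)%N ->
  (q%:R : rat) ^+ (j.+3 * j.+2) * gauss q (e - 1) j.+2 <=
  gauss q (e + j).+2 j.+2 - gauss q (e + j).+2 j.+1 *
     (((q%:R : rat) ^+ j.+3 - 1) / ((q%:R : rat) ^+ j.+2 - 1)).
Proof.
move=> hq he.
have hy : 3 <= (q%:R : rat) by rewrite (ler_nat _ 3 q).
have E1 : (q%:R : rat) ^+ (j.+3 * j.+2) = \prod_(i < j.+2) (q%:R : rat) ^+ j.+3.
  by rewrite big_const_ord iter_mulr_1 exprM.
rewrite E1 /gauss -big_split /=.
rewrite (big_ord_recr j.+1) /=.
rewrite (big_ord_recr j.+1 (fun i : 'I_(j.+2) => _)) /=.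
set A := \prod_(i < j.+1) _.
set B := \prod_(i < j.+1) _.
have hAB : 0 <= A <= B.
  apply/andP; split.
    apply: prodr_ge0 => i _. by case: (ptw _ _ _ _ hq he (ltnW (ltn_ord i))).
  apply: ler_prod => i _.
  case: (ptw _ _ _ _ hq he (ltnW (ltn_ord i))) => p0 p1.
  apply/andP; split => //.
  rewrite -p1 lerDl; apply: divr_ge0.
    have := pow_ge _ j.+3 hy (ltn0Sn _); lra.
  have := pow_ge _ i.+1 hy (ltn0Sn _); lra.
case: (ptw _ _ _ _ hq he (leqnn j.+1)) => c0 c1.
move/andP: hAB => [A0 AB].
rewrite -mulrBr -c1 addrK.
by apply: ler_wpM2r.
Qed.

Lemma stepB q e j : (3 <= q)%N ->
  gauss q (e + j).+2 j.+1 = gauss q (e + j) j *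
   ((((q%:R : rat) ^+ (e + j).+2 - 1) * ((q%:R : rat) ^+ (e + j).+1 - 1)) /
    (((q%:R : rat) ^+ e.+1 - 1) * ((q%:R : rat) ^+ j.+1 - 1))).
Proof.
move=> hq.
have hy : 3 <= (q%:R : rat) by rewrite (ler_nat _ 3 q).
have h := gauss_shift2 q (e + j) j.
have x1 : ((e + j).+2 - j = e.+2)%N by lia.
have x2 : ((e + j).+1 - j = e.+1)%N by lia.
rewrite x1 x2 in h.
rewrite gauss_recr x1.
set y := (q%:R : rat) in h *.
have n1 : y ^+ e.+2 - 1 != 0 by apply/eqP; have := pow_ge _ e.+2 hy (ltn0Sn _); lra.
have n2 : y ^+ e.+1 - 1 != 0 by apply/eqP; have := pow_ge _ e.+1 hy (ltn0Sn _); lra.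
have n3 : y ^+ j.+1 - 1 != 0 by apply/eqP; have := pow_ge _ j.+1 hy (ltn0Sn _); lra.
have hg : gauss q (e + j).+2 j = gauss q (e + j) j * ((y ^+ (e + j).+2 - 1) * (y ^+ (e + j).+1 - 1))
   / ((y ^+ e.+2 - 1) * (y ^+ e.+1 - 1)).
  by rewrite -h mulfK // mulf_neq0.
by rewrite hg; field; rewrite n1 n2 n3.
Qed.

Lemma core q e j t : (3 <= q)%N -> (t.+1 <= j)%N -> (j.+3 <= e)%N ->
  gauss q (e + j) j * (1 + theta q t.+2 * (q%:R : rat) ^+ j.+1 *
      (((q%:R : rat) ^+ e - 1) / ((q%:R : rat) ^+ j.+1 - 1))) <
  gauss q (e + j).+2 j.+2 - (q%:R : rat) ^+ (j.+3 * j.+2) * gauss q (e - 1) j.+2.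
Proof.
move=> hq htj hje.
have hy : 3 <= (q%:R : rat) by rewrite (ler_nat _ 3 q).
have hA := stepA _ _ _ hq hje.
rewrite stepB // in hA.
have hG : 0 < gauss q (e + j) j by apply: gauss_gt0 => //; lia.
set y := (q%:R : rat) in hA hy *.
have hR : 3 <= y ^+ j.+1 by have := pow_ge _ j.+1 hy (ltn0Sn _); lra.
have hE : y * y * y ^+ j.+1 <= y ^+ e.
  by rewrite -mulrA -!exprS; apply: pow_le => //; lia.
have hT : 27 <= y ^+ t.+3.
  have h3 : y ^+ 3 <= y ^+ t.+3 by apply: pow_le => //; lia.
  have : 27 <= y ^+ 3.
    rewrite !exprS expr0 mulr1.
    have := lemM 3 3 y y; have := lemM 9 3 (y*y) y; lra.
  lra.
have hTR : y ^+ t.+3 <= y * y ^+ j.+1 by rewrite -exprS; apply: pow_le => //; lia.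
have hC := stepC _ _ _ _ hy hR hE hT hTR.
have e1 : y * y ^+ e * y ^+ j.+1 = y ^+ (e + j).+2 by rewrite -mulrA -exprD -exprS addnS.
have e2 : y ^+ e * y ^+ j.+1 = y ^+ (e + j).+1 by rewrite -exprD addnS.
have e3 : y * y ^+ e = y ^+ e.+1 by rewrite -exprS.
have e4 : y * y * y ^+ j.+1 = y ^+ j.+3 by rewrite -mulrA -!exprS.
have e5 : y * y ^+ j.+1 = y ^+ j.+2 by rewrite -exprS.
rewrite e1 e2 e3 e4 e5 in hC.
have hth : theta q t.+2 = (y ^+ t.+3 - 1) / (y - 1) by [].
rewrite hth.
have := ltr_pM2l hG; move=> /(_ _ _) hm.
set X := _ / _ * (_ / _) in hC.
set Y := 1 + _ in hC.
have hGY : gauss q (e + j) j * Y < gauss q (e + j) j * X by rewrite ltr_pM2l.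
rewrite /X in hGY.
rewrite /Y.
set Z := (_ / _) in hA.
rewrite /Z in hA. rewrite -/Y. apply: (lt_le_trans hGY). rewrite mulrA. lra.
Qed.

Theorem mainTheorem15 (q n k t : nat) :
  prime_power q -> (3 <= q)%N -> (2 * k - t < n)%N -> (2 * t + 2 < k)%N ->
  theta q k.+1 - theta q (k - t) + gauss q (n - t) (k - t)
    - (q%:R : rat) ^+ ((k - t + 1) * (k - t)) * gauss q (n - k - 1) (k - t)
  > gauss q (n - t - 2) (k - t - 2)
    * (1 + theta q (t + 2) * (q%:R : rat) ^+ (k - t - 1)
           * (((q%:R : rat) ^+ (n - k) - 1) / ((q%:R : rat) ^+ (k - t - 1) - 1))).
Proof.
move=> _ hq hn hk.
set j := (k - t - 2)%N.
set e := (n - k)%N.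
have h1 : (n - t - 2 = e + j)%N by rewrite /e /j; lia.
have h2 : (k - t - 1 = j.+1)%N by rewrite /j; lia.
have h3 : (k - t + 1 = j.+3)%N by rewrite /j; lia.
have h4 : (n - k - 1 = e - 1)%N by [].
have h5 : (n - t = (e + j).+2)%N by rewrite /e /j; lia.
have h6 : (k - t = j.+2)%N by rewrite /j; lia.
have h7 : (t + 2 = t.+2)%N by lia.
have htj : (t.+1 <= j)%N by rewrite /j; lia.
have hje : (j.+3 <= e)%N by rewrite /e /j; lia.
rewrite h1 -/j h2 h3 h5 h6 h7.
have hc := core _ _ _ _ hq htj hje.
have hy : 3 <= (q%:R : rat) by rewrite (ler_nat _ 3 q).
have hth : theta q j.+2 <= theta q k.+1.
  rewrite /theta; apply: ler_wpM2r.
    by rewrite invr_ge0; lra.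
  have : (q%:R : rat) ^+ j.+3 <= (q%:R : rat) ^+ k.+2 by apply: pow_le => //; rewrite /j; lia.
  lra.
lra.
Qed.
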